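(* There exist universal constants $C,C'>0$ such that the following holds. For every $m>0$, every $\alpha,\beta\in(0,1/3)$, every $\epsilon\in(0,1)$ and every odd $n\in\mathbb{N}$ with $n\epsilon\ge C\ln(1/(\alpha\beta))$, and every $D\in\mathcal{CTM}$, with probability at least $1-\beta$, $$p_\alpha(D,\mathtt{DPExpMed}_\alpha(D))\le \frac{C'}{\epsilon}\max\left[1,\ln\frac{1}{\alpha\beta n\epsilon}\right].$$
   Context: $V=[-m/2,m/2]$. A dataset is $D=(x_1,\dots,x_n)\in V^n$, indexed so that $x_1\le\dots\le x_n$, with median $\mathcal{T}(D)=x_{\lceil n/2\rceil}$. $\mathcal{CTM}$ is the set of datasets with $|x_{i+1}-x_i|\ge|x_{j+1}-x_j|$ for all $1\le i<j\le\lceil n/2\rceil-1$ and $|x_i-x_{i-1}|\ge|x_j-x_{j-1}|$ for all $\lceil n/2\rceil+1\le j<i\le n$. The percentile loss $q(D,a)$ for $a\in V$ is: $\min\{|\lceil n/2\rceil-i|: a\in[x_i,\mathcal{T}(D)]\}$ if $a\in[x_1,\mathcal{T}(D)]$; $\min\{|\lceil n/2\rceil-i|: a\in[\mathcal{T}(D),x_i]\}$ if $a\in(\mathcal{T}(D),x_n]$; $\lceil n/2\rceil$ otherwise. The widened loss is $p_\alpha(D,\ell)=\min_{a\in V:|a-\ell|\le\alpha m}q(D,a)$. $\mathtt{DPExpMed}_\alpha(D)$ is the random point of $V$ with density proportional to $\exp(-\frac{\epsilon}{2}p_\alpha(D,\ell))$. *)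

(* Defs.v *)
From HB Require Import structures.
From mathcomp Require Import all_boot all_order all_algebra.
From mathcomp Require Import all_classical all_reals all_analysis.
From mathcomp Require Import Rstruct.
Set Implicit Arguments. Unset Strict Implicit. Unset Printing Implicit Defensive.
Import Order.TTheory GRing.Theory Num.Theory.
Local Open Scope ring_scope.
Local Open Scope classical_set_scope.

Section DPMed.
Variable R : realType.

Definition Vset (m : R) : set R := `[- (m / 2), m / 2]%classic.

(* A dataset D = (x_1,...,x_n) is represented by x : nat -> R, of which only
   the entries x 1, ..., x n are used (1-indexed as in the paper). *)
Definition is_dataset (m : R) (n : nat) (x : nat -> R) : Prop :=
  (forall i, (1 <= i <= n)%N -> x i \in `[- (m / 2), m / 2]) /\
  (forall i, (1 <= i < n)%N -> x i <= x i.+1).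

Definition medidx (n : nat) : nat := n.+1./2.
Definition med (n : nat) (x : nat -> R) : R := x (medidx n).

Definition natdist (a b : nat) : nat := (a - b) + (b - a).

Definition CTM (n : nat) (x : nat -> R) : Prop :=
  (forall i j, (1 <= i)%N -> (i < j)%N -> (j <= (medidx n).-1)%N ->
     `|x j.+1 - x j| <= `|x i.+1 - x i|) /\
  (forall i j, ((medidx n).+1 <= j)%N -> (j < i)%N -> (i <= n)%N ->
     `|x j - x j.-1| <= `|x i - x i.-1|).

Definition qloss (n : nat) (x : nat -> R) (a : R) : nat :=
  let k := medidx n in
  let T := med n x in
  if (x 1%N <= a) && (a <= T) then
    \big[minn/k]_(1 <= i < n.+1 | (x i <= a) && (a <= T)) natdist k i
  else if (T < a) && (a <= x n) then
    \big[minn/k]_(1 <= i < n.+1 | (T <= a) && (a <= x i)) natdist k i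
  else k.

(* widened loss p_alpha(D,l) = min over a in V with |a - l| <= alpha m of
   q(D,a); written as an infimum (the set is a nonempty set of naturals for
   l in V, so the infimum is attained, i.e. it is the minimum). *)
Definition ploss (m alpha : R) (n : nat) (x : nat -> R) (l : R) : R :=
  inf [set ((qloss n x a)%:R : R) | a in
        [set a | Vset m a /\ `|a - l| <= alpha * m]].

Definition dens (m alpha eps : R) (n : nat) (x : nat -> R) (l : R) : R :=
  expR (- (eps / 2) * ploss m alpha n x l).

Definition DPExpMed_prob (m alpha eps : R) (n : nat) (x : nat -> R)
    (A : set R) : R :=
  fine (\int[lebesgue_measure]_(l in Vset m `&` A) (dens m alpha eps n x l)%:E)
  / fine (\int[lebesgue_measure]_(l in Vset m) (dens m alpha eps n x l)%:E).

End DPMed.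

(* Main.v *)
Require Import Defs.
From mathcomp Require Import all_boot all_order all_algebra.
From mathcomp Require Import all_classical all_reals all_analysis.
From mathcomp Require Import Rstruct zify ring lra.
From mathcomp Require Import measurable_realfun.
Import Order.TTheory GRing.Theory Num.Theory.
Local Open Scope ring_scope.
Local Open Scope classical_set_scope.
Set Implicit Arguments. Unset Strict Implicit. Unset Printing Implicit Defensive.

Lemma bigmin_le_idx (r : seq nat) (P : pred nat) (F : nat -> nat) k :
  (\big[minn/k]_(j <- r | P j) F j <= k)%N.
Proof.
apply: (big_rec (fun v => v <= k)%N) => // i v _ hv.
exact: leq_trans (geq_minr _ _) hv.
Qed.

Lemma bigmin_le (r : seq nat) (P : pred nat) (F : nat -> nat) k i :
  i \in r -> P i -> (\big[minn/k]_(j <- r | P j) F j <= F i)%N.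
Proof.
elim: r => [//|a r IH]; rewrite in_cons big_cons => /orP [/eqP <-|hi] hP.
  by rewrite hP geq_minl.
case: (P a); [exact: leq_trans (geq_minr _ _) (IH hi hP) | exact: IH hi hP].
Qed.

Lemma bigmin_ex (r : seq nat) (P : pred nat) (F : nat -> nat) k :
  (\big[minn/k]_(j <- r | P j) F j < k)%N ->
  exists i, [/\ i \in r, P i & (F i <= \big[minn/k]_(j <- r | P j) F j)%N].
Proof.
elim: r => [|a r IH]; first by rewrite big_nil ltnn.
rewrite big_cons; case: ifP => hP.
  case: (leqP (F a) (\big[minn/k]_(j <- r | P j) F j)) => h.
    move=> _; exists a; split => //; by rewrite in_cons eqxx.
  move=> /IH [i [hi hPi hF]].
  exists i; split => //; by rewrite in_cons hi orbT.
move=> /IH [i [hi hPi hF]]; exists i; split => //.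
by rewrite in_cons hi orbT.
Qed.

Lemma xmono (R : realType) m n (x : nat -> R) : is_dataset m n x ->
  forall i j, (1 <= i)%N -> (i <= j)%N -> (j <= n)%N -> x i <= x j.
Proof.
move=> [_ hs] i j hi; elim: j => [|j IH]; first by rewrite leqn0 => /eqP ->; rewrite lexx.
rewrite leq_eqVlt => /orP [/eqP -> //|]; rewrite ltnS => hij hjn.
apply: le_trans (IH hij (ltnW hjn)) _; apply: hs.
by rewrite (leq_trans hi hij) hjn.
Qed.

Lemma khalf n : odd n -> (medidx n + medidx n = n.+1)%N.
Proof.
move=> hn; rewrite /medidx addnn.
have := odd_double_half n.+1; by rewrite /= hn.
Qed.

Lemma qloss_le_k (R : realType) n (x : nat -> R) a : (qloss n x a <= medidx n)%N.
Proof.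
rewrite /qloss /=; case: ifP => _; first exact: bigmin_le_idx.
case: ifP => _; [exact: bigmin_le_idx|exact: leqnn].
Qed.

Lemma Q1 (R : realType) m n (x : nat -> R) a j : is_dataset m n x -> odd n ->
  (j < medidx n)%N -> x (medidx n - j)%N <= a -> a <= x (medidx n + j)%N ->
  (qloss n x a <= j)%N.
Proof.
move=> hd hn hj ha hb; have hk := khalf hn.
have xm := xmono hd.
rewrite /qloss /med; cbv zeta; set k := medidx n in hj ha hb hk *.
case: (boolP (a <= x k)) => haT.
  have h1 : x 1%N <= a by apply: le_trans ha; apply: (xm); lia.
  rewrite h1 /=.
  apply: (leq_trans (@bigmin_le _ _ _ _ (k - j)%N _ _)).
  - rewrite mem_index_iota; lia.
  - by rewrite /= ha.
  - rewrite /natdist; lia.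
rewrite andbF.
have hT : x k < a by rewrite ltNge.
have hn' : a <= x n by apply: le_trans hb _; apply: (xm); lia.
rewrite hT hn' /=.
apply: (leq_trans (@bigmin_le _ _ _ _ (k + j)%N _ _)).
- rewrite mem_index_iota; lia.
- by rewrite /= hb (ltW hT).
- rewrite /natdist; lia.
Qed.

Lemma Q2 (R : realType) m n (x : nat -> R) a j : is_dataset m n x -> odd n ->
  (j < medidx n)%N -> (qloss n x a <= j)%N ->
  x (medidx n - j)%N <= a /\ a <= x (medidx n + j)%N.
Proof.
move=> hd hn hj; have hk := khalf hn.
have xm := xmono hd.
rewrite /qloss /med; cbv zeta; set k := medidx n in hj hk *.
case: ifP => [/andP [h1 haT]|_].
  move=> hq; have /bigmin_ex [i [hi /andP [hia _] hF]] : (\big[minn/k]_(1 <= i < n.+1 | (x i <= a)%R && (a <= x k)%R) natdist k i < k)%N.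
    exact: leq_ltn_trans hq hj.
  move: hi; rewrite mem_index_iota => hi.
have hF' := leq_trans hF hq; rewrite {1}/natdist in hF'.
  split.
    apply: le_trans hia; apply: (xm); lia.
  apply: le_trans haT _; apply: (xm); lia.
case: ifP => [/andP [hT hn']|_]; last by lia.
move=> hq; have /bigmin_ex [i [hi /andP [_ hai] hF]] : (\big[minn/k]_(1 <= i < n.+1 | (x k <= a)%R && (a <= x i)%R) natdist k i < k)%N.
  exact: leq_ltn_trans hq hj.
move: hi; rewrite mem_index_iota => hi.
have hF' := leq_trans hF hq; rewrite {1}/natdist in hF'.
split.
  apply: le_trans (ltW hT); apply: (xm); lia.
apply: le_trans hai _; apply: (xm); lia.
Qed.
Lemma memitv (R : realType) (a b y : R) : (y \in `[a, b]%classic) = (a <= y <= b).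
Proof.
case: (boolP (a <= y <= b)) => h.
  apply: mem_set => /=. by rewrite in_itv /= h.
apply/negbTE/negP => /set_mem /=. by rewrite in_itv /= (negbTE h).
Qed.

Section P2.
Variables (R : realType) (m alpha : R) (n : nat) (x : nat -> R).
Hypothesis hd : is_dataset m n x.
Hypothesis hn : odd n.

Definition lo j := x (medidx n - j)%N - alpha * m.
Definition hi j := x (medidx n + j)%N + alpha * m.
Definition inI j (l : R) : bool := (lo j <= l) && (l <= hi j).
Definition Pc (l : R) : nat := count (fun j => ~~ inI j l) (iota 0 (medidx n)).

Lemma lo_anti j j' : (j <= j')%N -> (j' < medidx n)%N -> lo j' <= lo j.
Proof.
move=> h1 h2; have hk := khalf hn; rewrite /lo lerD2r.
apply: (xmono hd); lia.
Qed.

Lemma hi_mono j j' : (j <= j')%N -> (j' < medidx n)%N -> hi j <= hi j'.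
Proof.
move=> h1 h2; have hk := khalf hn; rewrite /hi lerD2r.
apply: (xmono hd); lia.
Qed.

Lemma inI_nest j j' l : (j <= j')%N -> (j' < medidx n)%N -> inI j l -> inI j' l.
Proof.
move=> h1 h2 /andP [a b]; apply/andP; split.
  exact: le_trans (lo_anti h1 h2) a.
exact: le_trans b (hi_mono h1 h2).
Qed.

Lemma count_down (a : pred nat) K j :
  (forall i i', (i <= i')%N -> (i' < K)%N -> a i' -> a i) -> (j < K)%N ->
  (count a (iota 0 K) <= j)%N = ~~ a j.
Proof.
move=> hdown hj.
have -> : iota 0 K = iota 0 j ++ iota j (K - j).
  by rewrite -{1}(subnKC (ltnW hj)) iotaD.
rewrite count_cat.
case: (boolP (a j)) => haj /=.
  have : (j.+1 <= count a (iota 0 j) + count a (iota j (K - j)))%N.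
    have h1 : count a (iota 0 j) = j.
      rewrite -{2}(size_iota 0 j); apply/eqP; rewrite -all_count.
      apply/allP => i; rewrite mem_iota add0n => /andP [_ hi].
      apply: (hdown i j) => //; exact: ltnW.
    have h2 : (0 < count a (iota j (K - j)))%N.
      rewrite -has_count; apply/hasP; exists j => //.
      rewrite mem_iota leqnn /=; lia.
    lia.
  lia.
have h2 : count a (iota j (K - j)) = 0%N.
  apply/eqP; rewrite -leqn0 leqNgt -has_count; apply/hasPn => i.
  rewrite mem_iota => /andP [h1 h3]; apply/negP => hai.
  have : a j by apply: (hdown j i) => //; lia.
  by rewrite (negbTE haj).
rewrite h2 addn0.
by have := count_size a (iota 0 j); rewrite size_iota.
Qed.

Lemma Pc_le j l : (j < medidx n)%N -> (Pc l <= j)%N = inI j l.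
Proof.
move=> hj; rewrite /Pc count_down ?negbK //.
move=> i i' hii' hi' /negP hn1; apply/negP => hin; apply: hn1.
exact: inI_nest hin.
Qed.

Lemma Pc_le_k l : (Pc l <= medidx n)%N.
Proof. by rewrite /Pc; have := count_size (fun j => ~~ inI j l) (iota 0 (medidx n)); rewrite size_iota. Qed.

Lemma inV (y : R) : Vset m y <-> - (m / 2) <= y <= m / 2.
Proof. rewrite /Vset /=; exact: iff_refl. Qed.

Lemma xinV i : (1 <= i <= n)%N -> - (m / 2) <= x i <= m / 2.
Proof. by move=> h; rewrite -memitv; exact: (proj1 hd i h). Qed.

Hypothesis ham : 0 <= alpha * m.

Lemma ploss_eq l : Vset m l -> ploss m alpha n x l = (Pc l)%:R.
Proof.
move=> hl; have hk := khalf hn.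
rewrite /ploss.
set S := [set _ | _ in _].
have lb : lbound S (Pc l)%:R.
  move=> y [a [ha hal] <-]; rewrite ler_nat.
  case: (leqP (medidx n) (qloss n x a)) => hq.
    exact: leq_trans (Pc_le_k l) hq.
  have [h1 h2] := Q2 hd hn hq (leqnn _).
  rewrite Pc_le //; move: hal; rewrite ler_norml => /andP [h3 h4].
  apply/andP; rewrite /lo /hi; split; lra.
have hlb : has_lbound S by exists 0 => y [a _ <-]; rewrite ler0n.
apply/eqP; rewrite eq_le; apply/andP; split; last first.
  apply: lb_le_inf => //; exists (qloss n x l)%:R; exists l => //.
  by split => //; rewrite subrr normr0.
have key : exists2 a, (Vset m a /\ `|a - l| <= alpha * m) & (qloss n x a <= Pc l)%N.
  case: (ltnP (Pc l) (medidx n)) => hp.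
    have hin : inI (Pc l) l by rewrite -Pc_le.
    move: hin => /andP []; rewrite /lo /hi => hin1 hin2.
    set p := Pc l in hp hin1 hin2 *.
    have hx1 := xinV (i := (medidx n - p)%N) ltac:(lia).
    have hx2 := xinV (i := (medidx n + p)%N) ltac:(lia).
    have hxx : x (medidx n - p)%N <= x (medidx n + p)%N by apply: (xmono hd); lia.
    move: hx1 hx2 => /andP [hx1 hx1'] /andP [hx2 hx2'].
    pose a := if l < x (medidx n - p)%N then x (medidx n - p)%N else if x (medidx n + p)%N < l then x (medidx n + p)%N else l.
    have [ha1 ha2] : x (medidx n - p)%N <= a /\ a <= x (medidx n + p)%N.
      clear lb hlb.
      rewrite /a; case: ifP => h1; first by split; lra.
      move/negbT: h1; rewrite -leNgt => h1.
      case: ifP => h2; first by split; lra.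
      move/negbT: h2; rewrite -leNgt => h2; split; lra.
    have hal : `|a - l| <= alpha * m.
      rewrite ler_norml; apply/andP; rewrite /a; case: ifP => h1; first by split; lra.
      move/negbT: h1; rewrite -leNgt => h1.
      case: ifP => h2. split; first lra. apply: le_trans ham; rewrite subr_le0; exact: ltW.
      by move/negbT: h2; rewrite -leNgt => h2; rewrite subrr oppr_le0 ham.
    clearbody a.
    exists a; last exact: Q1 hd hn hp ha1 ha2.
    split => //; rewrite inV; apply/andP; split; lra.
  exists l; first by split => //; rewrite subrr normr0.
  exact: leq_trans (qloss_le_k _ _ _) hp.
case: key => a ha hq.
apply: le_trans (_ : (qloss n x a)%:R <= _); last by rewrite ler_nat.
by apply: (ge_inf hlb); exists a.
Qed.

End P2.
Lemma mfac (R : realType) (a b q : R) : measurable_fun [set: R] (fun l : R => if (a <= l) && (l <= b) then 1 else q).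
Proof.
have -> : (fun l : R => if (a <= l) && (l <= b) then 1 else q) = (fun l => q + (1 - q) * \1_(`[a, b]%classic) l).
  apply: funext => l; rewrite indicE memitv; case: ifP => _; rewrite ?mulr1 ?mulr0 ?addr0 //.
  by rewrite addrC subrK.
apply: measurable_realfun.measurable_funD; first exact: measurable_cst.
apply: measurable_realfun.measurable_funM; first exact: measurable_cst.
exact: measurable_realfun.measurable_indic.
Qed.

Lemma lebitv (R : realType) (a b : R) : a <= b -> (@lebesgue_measure R) (`[a, b]%classic) = (b - a)%:E.
Proof.
move=> ab. rewrite lebesgue_measure_itv /= lte_fin. case: ltgtP ab => //.
move=> ->. by rewrite subrr.
Qed.

Section P3.
Variables (R : realType) (f : R -> R).
Hypothesis hf : measurable_fun [set: R] f.
Hypothesis f0 : forall l, 0 <= f l.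
Hypothesis f1 : forall l, f l <= 1.

Definition FF (S : set R) := (\int[@lebesgue_measure R]_(l in S) (f l)%:E)%E.

Lemma Fm (S : set R) : measurable S -> measurable_fun S (fun l => (f l)%:E).
Proof.
move=> mS; apply/(measurable_EFinP S f); exact: measurable_funS hf.
Qed.

Lemma F_ge0 S : (0 <= FF S)%E.
Proof. by apply: integral_ge0 => l _; rewrite lee_fin. Qed.

Lemma F_le S c : measurable S -> 0 <= c -> (forall l, S l -> f l <= c) ->
  (FF S <= c%:E * (@lebesgue_measure R) S)%E.
Proof.
move=> mS c0 hc; rewrite -integral_cst //.
apply: ge0_le_integral => //.
all: try (by move=> l _; rewrite lee_fin).
all: try exact: Fm.
all: try exact: measurable_cst.
all: by move=> l hl; rewrite /= lee_fin; apply: hc.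
Qed.

Lemma F_ge S c : measurable S -> 0 <= c -> (forall l, S l -> c <= f l) ->
  (c%:E * (@lebesgue_measure R) S <= FF S)%E.
Proof.
move=> mS c0 hc; rewrite -integral_cst //.
apply: ge0_le_integral => //.
all: try (by move=> l _; rewrite lee_fin).
all: try exact: Fm.
all: try exact: measurable_cst.
all: by move=> l hl; rewrite /= lee_fin; apply: hc.
Qed.

Lemma F_add A B : measurable A -> measurable B -> A `&` B = set0 ->
  FF (A `|` B) = (FF A + FF B)%E.
Proof.
move=> mA mB hAB; rewrite /FF ge0_integral_setU //.
- apply: Fm; exact: measurableU.
- by move=> l _; rewrite lee_fin.
- exact/disj_set2P.
Qed.

Lemma F_fin S M : measurable S -> ((@lebesgue_measure R) S <= M%:E)%E ->
  FF S = (fine (FF S))%:E.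
Proof.
move=> mS hM; rewrite fineK // ge0_fin_numE ?F_ge0 //.
apply: (le_lt_trans (F_le mS ler01 (fun l _ => f1 l))).
rewrite mul1e; exact: le_lt_trans hM (ltry _).
Qed.

End P3.
Lemma prod_count (R : realType) (s : seq nat) (b : pred nat) (q : R) :
  \prod_(j <- s) (if b j then 1 else q) = q ^+ count (fun j => ~~ b j) s.
Proof.
elim: s => [|a s IH]; first by rewrite big_nil expr0.
rewrite big_cons IH /=; case: (b a) => /=; first by rewrite mul1r add0n.
by rewrite add1n exprS.
Qed.

Lemma gap_sum (R : realType) (x : nat -> R) (g : R) q p :
  (forall u, (u < p)%N -> g <= x (q + u).+1 - x (q + u)%N) ->
  p%:R * g <= x (q + p)%N - x q.
Proof.
elim: p => [|p IH] h; first by rewrite mul0r addn0 subrr.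
have h1 := IH (fun u hu => h u (ltnW hu)).
have h2 := h p (ltnSn p).
rewrite -[in X in X * g]addn1 natrD mulrDl mul1r addnS; lra.
Qed.

Section P4.
Variables (R : realType) (m alpha eps : R) (n : nat) (x : nat -> R).
Hypothesis hd : is_dataset m n x.
Hypothesis hn : odd n.
Hypothesis hm : 0 < m.
Hypothesis ha : 0 < alpha.
Hypothesis he : 0 < eps.
Hypothesis hctm : CTM n x.

Definition qq := expR (- (eps / 2)).
Definition fq (l : R) := \prod_(j <- iota 0 (medidx n)) (if inI m alpha n x j l then 1 else qq).
Definition Iset j := `[lo m alpha n x j, hi m alpha n x j]%classic.

Lemma qq_gt0 : 0 < qq. Proof. exact: expR_gt0. Qed.
Lemma qq_le1 : qq <= 1.
Proof. have he' := he; rewrite /qq expR_le1 oppr_le0; lra. Qed.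

Lemma fq_eq l : fq l = qq ^+ Pc m alpha n x l.
Proof. by rewrite /fq prod_count. Qed.

Lemma fq_meas : measurable_fun [set: R] fq.
Proof.
apply: measurable_prod => j _; exact: mfac.
Qed.

Lemma fq0 l : 0 <= fq l.
Proof. rewrite fq_eq; apply: exprn_ge0; exact: ltW qq_gt0. Qed.

Lemma fq1 l : fq l <= 1.
Proof. rewrite fq_eq; apply: exprn_ile1; [exact: ltW qq_gt0|exact: qq_le1]. Qed.

Lemma ham : 0 <= alpha * m.
Proof. apply: mulr_ge0; exact: ltW. Qed.

Lemma dens_fq l : Vset m l -> dens m alpha eps n x l = fq l.
Proof.
move=> hl; rewrite /dens (ploss_eq hd hn ham hl) fq_eq /qq -expRM_natr.
by rewrite mulNr.
Qed.

Lemma IsetE j l : Iset j l = inI m alpha n x j l.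
Proof. by rewrite /Iset /= in_itv. Qed.

Lemma Iset_meas j : measurable (Iset j).
Proof. exact: measurable_itv. Qed.

Lemma V_meas : measurable (Vset m).
Proof. exact: measurable_itv. Qed.

Lemma V_measure : (@lebesgue_measure R) (Vset m) = m%:E.
Proof. have hm' := hm; rewrite /Vset lebitv; [congr (_%:E); lra | lra]. Qed.

Lemma sub_measure S : measurable S -> S `<=` Vset m -> ((@lebesgue_measure R) S <= m%:E)%E.
Proof.
move=> mS hS; rewrite -V_measure; apply: le_measure => //; rewrite inE //; exact: V_meas.
Qed.

Definition G S := fine (FF fq S).

Lemma G_E S : measurable S -> S `<=` Vset m -> FF fq S = (G S)%:E.
Proof.
move=> mS hS; apply: (F_fin fq_meas fq0 fq1 mS); exact: sub_measure.
Qed.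

Lemma G_add A B : measurable A -> measurable B -> A `<=` Vset m -> B `<=` Vset m ->
  A `&` B = set0 -> G (A `|` B) = G A + G B.
Proof.
move=> mA mB hA hB hAB.
have := F_add fq_meas fq0 mA mB hAB.
rewrite (G_E mA hA) (G_E mB hB) (G_E (measurableU _ _ mA mB)); last by move=> l [] ?; [apply: hA|apply: hB].
by move=> [].
Qed.

Lemma G_le S c b : measurable S -> S `<=` Vset m -> 0 <= c ->
  (forall l, S l -> fq l <= c) -> ((@lebesgue_measure R) S <= b%:E)%E -> G S <= c * b.
Proof.
move=> mS hS c0 hc hb.
have := F_le fq_meas fq0 mS c0 hc; rewrite (G_E mS hS) => h.
rewrite -lee_fin; apply: le_trans h _; rewrite EFinM.
by apply: lee_wpmul2l => //; rewrite lee_fin.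
Qed.

Lemma G_ge S c b : measurable S -> S `<=` Vset m -> 0 <= c ->
  (forall l, S l -> c <= fq l) -> (@lebesgue_measure R) S = b%:E -> c * b <= G S.
Proof.
move=> mS hS c0 hc hb.
have := F_ge fq_meas mS c0 hc; rewrite (G_E mS hS) hb.
by rewrite -EFinM lee_fin.
Qed.

Lemma G_ge0 S : measurable S -> S `<=` Vset m -> 0 <= G S.
Proof.
move=> mS hS; have := F_ge0 fq0 S; by rewrite (G_E mS hS) lee_fin.
Qed.

End P4.

Lemma half_facts k : (k./2 + k./2 <= k <= k./2 + k./2 + 1)%N.
Proof. have := odd_double_half k; rewrite -addnn; case: (odd k) => /= h; lia. Qed.

Section P5.
Variables (R : realType) (m alpha eps : R) (n : nat) (x : nat -> R).
Hypothesis hd : is_dataset m n x.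
Hypothesis hn : odd n.
Hypothesis hm : 0 < m.
Hypothesis ha : 0 < alpha.
Hypothesis hctm : CTM n x.
Hypothesis hk8 : (8 <= medidx n)%N.

Definition Kp := (medidx n - (medidx n)./2 - 1)%N.

Lemma left_gap i : (1 <= i <= (medidx n)./2)%N ->
  Kp%:R * (x (medidx n - i).+1 - x (medidx n - i)%N) <= m.
Proof.
move=> hi; have hk := khalf hn; have hs := half_facts (medidx n).
have h := @gap_sum R x (x (medidx n - i).+1 - x (medidx n - i)%N) 1 Kp.
have /(_ _) h' : (forall u, (u < Kp)%N -> x (medidx n - i).+1 - x (medidx n - i)%N <= x (1 + u).+1 - x (1 + u)%N).
  move=> u hu.
  have := (proj1 hctm) (1 + u)%N (medidx n - i)%N ltac:(lia) ltac:(rewrite /Kp in hu; lia) ltac:(lia).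
  rewrite !ger0_norm // subr_ge0; apply: (xmono hd); rewrite /Kp in hu; lia.
have {h}h := h h'.
have h1 := xinV hd (i := (1 + Kp)%N) ltac:(rewrite /Kp; lia).
have h2 := xinV hd (i := 1%N) ltac:(lia).
move: h1 h2 => /andP [h1 h1'] /andP [h2 h2'].
lra.
Qed.

Lemma right_gap i : (1 <= i <= (medidx n)./2)%N ->
  Kp%:R * (x (medidx n + i)%N - x (medidx n + i).-1) <= m.
Proof.
move=> hi; have hk := khalf hn; have hs := half_facts (medidx n).
have h := @gap_sum R x (x (medidx n + i)%N - x (medidx n + i).-1) (medidx n + (medidx n)./2) Kp.
have /(_ _) h' : (forall u, (u < Kp)%N -> x (medidx n + i)%N - x (medidx n + i).-1 <= x (medidx n + (medidx n)./2 + u).+1 - x (medidx n + (medidx n)./2 + u)%N).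
  move=> u hu.
  have := (proj2 hctm) (medidx n + (medidx n)./2 + u).+1 (medidx n + i)%N ltac:(lia) ltac:(rewrite /Kp in hu; lia) ltac:(rewrite /Kp in hu; lia).
  rewrite /= !ger0_norm // subr_ge0; apply: (xmono hd); rewrite /Kp in hu; lia.
have {h}h := h h'.
have h1 := xinV hd (i := (medidx n + (medidx n)./2 + Kp)%N) ltac:(rewrite /Kp; lia).
have h2 := xinV hd (i := (medidx n + (medidx n)./2)%N) ltac:(lia).
move: h1 h2 => /andP [h1 h1'] /andP [h2 h2'].
lra.
Qed.

Definition HH := 2 * m / Kp%:R.

Lemma layer_measure i : (1 <= i <= (medidx n)./2)%N ->
  ((@lebesgue_measure R) (Vset m `&` Iset m alpha n x i `\` Iset m alpha n x i.-1) <= HH%:E)%E.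
Proof.
move=> hii; have hk := khalf hn; have hs := half_facts (medidx n).
have hK : (0 < Kp)%N.
  rewrite /Kp; lia.
set l1 := lo m alpha n x i; set l0 := lo m alpha n x i.-1.
set h1 := hi m alpha n x i; set h0 := hi m alpha n x i.-1.
have hl : l1 <= l0 by apply: (lo_anti alpha hd hn); lia.
have hh : h0 <= h1 by apply: (hi_mono alpha hd hn); lia.
have sub : Vset m `&` Iset m alpha n x i `\` Iset m alpha n x i.-1 `<=` `[l1, l0]%classic `|` `[h0, h1]%classic.
  move=> l [[_ hI] hnI]; move: hI hnI; rewrite !IsetE /inI -/l1 -/l0 -/h1 -/h0 => /andP [a b] hnI.
  case: (leP l0 l) => c.
    right; rewrite /= in_itv /=; apply/andP; split => //.
    rewrite leNgt; apply/negP => d; apply: hnI; apply/andP; split => //; exact: ltW.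
  by left; rewrite /= in_itv /=; apply/andP; split => //; exact: ltW.
have mS : measurable (Vset m `&` Iset m alpha n x i `\` Iset m alpha n x i.-1).
  by apply: measurableD; [apply: measurableI; [exact: V_meas|exact: Iset_meas]|exact: Iset_meas].
have mU : measurable (`[l1, l0]%classic `|` `[h0, h1]%classic).
  by apply: measurableU; exact: measurable_itv.
apply: le_trans (le_measure (@lebesgue_measure R) (mem_set mS) (mem_set mU) sub) _.
apply: le_trans (measureU2 _ _ _) _; try exact: measurable_itv.
apply: (@le_trans _ _ ((l0 - l1)%:E + (h1 - h0)%:E)%E).
  rewrite le_eqVlt; apply/orP; left; apply/eqP; congr (_ + _)%E; [exact: lebitv|exact: lebitv].
rewrite -EFinD lee_fin.
have e1 : l0 - l1 = x (medidx n - i).+1 - x (medidx n - i)%N.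
  rewrite /l0 /l1 /lo; have -> : (medidx n - i.-1 = (medidx n - i).+1)%N by lia.
  ring.
have e2 : h1 - h0 = x (medidx n + i)%N - x (medidx n + i).-1.
  rewrite /h0 /h1 /hi; have -> : (medidx n + i.-1 = (medidx n + i).-1)%N by lia.
  ring.
rewrite e1 e2.
have g1 := left_gap hii; have g2 := right_gap hii.
have hKr : (0 : R) < Kp%:R by rewrite ltr0n.
rewrite /HH ler_pdivlMr //; lra.
Qed.

End P5.

Lemma VsetP (R : realType) (m y : R) : Vset m y <-> - (m / 2) <= y <= m / 2.
Proof. exact: iff_refl. Qed.

Lemma expR_ln_inv (R : realType) (z : R) : 0 < z -> expR (- ln (1 / z)) = z.
Proof.
move=> hz; rewrite div1r lnV ?posrE // opprK lnK // posrE //.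
Qed.

Theorem main_gen (R : realType) (m alpha beta eps : R) (n : nat) (x : nat -> R) :
  0 < m -> 0 < alpha -> alpha < 1 / 3 -> 0 < beta -> beta < 1 / 3 ->
  0 < eps -> eps < 1 -> odd n ->
  16 * ln (1 / (alpha * beta)) <= n%:R * eps ->
  is_dataset m n x -> CTM n x ->
  1 - beta <=
    DPExpMed_prob m alpha eps n x
      [set l | ploss m alpha n x l <=
               200 / eps * Num.max 1 (ln (1 / (alpha * beta * n%:R * eps)))].
Proof.
move=> hm ha ha3 hb hb3 he he1 hn hC hd hctm.
have hk := khalf hn.
have hab0 : 0 < alpha * beta by apply: mulr_gt0.
have hab9 : alpha * beta < 1 / 9.
  have := ltr_pM (ltW ha) (ltW hb) ha3 hb3; lra.
have hLeq := expR_ln_inv hab0.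
set L := ln (1 / (alpha * beta)) in hC hLeq.
have hL : 8 / 9 <= L.
  have h1 : ln (alpha * beta) <= alpha * beta - 1.
    by have := @le_ln1Dx R (alpha * beta - 1) ltac:(lra); rewrite addrC subrK.
  have h2 : L = - ln (alpha * beta) by rewrite /L div1r lnV // posrE.
  lra.
have hn0 : (0 : R) <= n%:R by rewrite ler0n.
have hn14 : (14 < n)%N.
  have h1 : n%:R * eps <= n%:R by rewrite ler_piMr // ltW.
  have : (14%:R : R) < n%:R by lra.
  by rewrite ltr_nat.
have hk8 : (8 <= medidx n)%N by clear -hk hn14; lia.
have hs := half_facts (medidx n).
have hamp : 0 <= alpha * m by apply: mulr_ge0; exact: ltW.
have ham3 : alpha * m <= m / 3.
  have h1 : alpha * m <= 1 / 3 * m by rewrite ler_pM2r // ltW.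
  lra.
have hint : forall S, S `<=` Vset m ->
    (\int[lebesgue_measure]_(l in S) (dens m alpha eps n x l)%:E)%E = FF (fq m alpha eps n x) S.
  move=> S hS; apply: eq_integral => l /set_mem hl.
  by rewrite (dens_fq eps hd hn hm ha (hS _ hl)).
rewrite /DPExpMed_prob (hint _ (@subIsetl _ _ _)) (hint _ (@subset_refl _ _)).
rewrite -/(G m alpha eps n x _) -/(G m alpha eps n x (Vset m)).
have hZ : alpha * m <= G m alpha eps n x (Vset m).
  have /andP [hxk1 hxk2] := xinV hd (i := medidx n) ltac:(clear -hk hk8; lia).
  pose a0 := if x (medidx n) <= 0 then x (medidx n) else x (medidx n) - alpha * m.
  have [a1 a2 a3 a4] : [/\ - (m / 2) <= a0, a0 + alpha * m <= m / 2,
      x (medidx n) - alpha * m <= a0 & a0 + alpha * m <= x (medidx n) + alpha * m].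
    rewrite /a0; case: ifP => h; first by split; lra.
    move/negbT: h; rewrite -ltNge => h; split; lra.
  clearbody a0.
  have mJ : measurable (`[a0, a0 + alpha * m]%classic : set R) by exact: measurable_itv.
  have hJV : (`[a0, a0 + alpha * m]%classic : set R) `<=` Vset m.
    move=> l; rewrite /= in_itv /= => /andP [h1 h2]; apply/VsetP; apply/andP; split; lra.
  have hJf : forall l, (`[a0, a0 + alpha * m]%classic : set R) l -> 1 <= fq m alpha eps n x l.
    move=> l; rewrite /= in_itv /= => /andP [h1 h2].
    have hI : inI m alpha n x 0 l.
      rewrite /inI /lo /hi subn0 addn0; apply/andP; split; lra.
    have := Pc_le alpha hd hn l (j := 0) ltac:(clear -hk8; lia); rewrite hI leqn0 => /eqP hP.
    by rewrite fq_eq hP expr0.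
  have hJm : (@lebesgue_measure R) (`[a0, a0 + alpha * m]%classic) = (alpha * m)%:E.
    rewrite (_ : (alpha * m)%:E = ((a0 + alpha * m) - a0)%:E); last by congr EFin; ring.
    apply: lebitv; lra.
  have hGJ := G_ge hm he mJ hJV ler01 hJf hJm.
  have hdis : (Vset m `\` `[a0, a0 + alpha * m]%classic) `&` `[a0, a0 + alpha * m]%classic = set0.
    by apply/seteqP; split => l // [[_ h1] h2].
  have := G_add alpha n x hm he (measurableD (@V_meas R m) mJ) mJ (@subDsetl _ _ _) hJV hdis.
  rewrite setDKU // => ->.
  have := G_ge0 alpha n x hm he (measurableD (@V_meas R m) mJ) (@subDsetl _ _ _).
  lra.
have hZ0 : 0 < G m alpha eps n x (Vset m) by apply: lt_le_trans hZ; apply: mulr_gt0.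

set Lam := Num.max 1 (ln (1 / (alpha * beta * n%:R * eps))).
have hLam1 : 1 <= Lam by rewrite /Lam le_max lexx.
have hLamY : ln (1 / (alpha * beta * n%:R * eps)) <= Lam by rewrite /Lam le_max lexx orbT.
have hn0' : (0 : R) < n%:R by rewrite ltr0n; clear -hn14; lia.
have hY := expR_ln_inv (z := alpha * beta * n%:R * eps) ltac:(apply: mulr_gt0 => //; exact: mulr_gt0).
clearbody Lam.
set tau := 200 / eps * Lam.
have htau0 : 0 <= tau by rewrite /tau; apply: mulr_ge0; [apply: divr_ge0 => //; exact: ltW|lra].
have htauE : eps / 2 * tau = 100 * Lam by rewrite /tau; field; lra.
clearbody tau.
set t := Num.Def.trunc tau.
have htt1 : tau < (t.+1)%:R by rewrite -truncn_le_nat.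
have htt0 : t%:R <= tau by rewrite truncn_le.
have hPt : forall p : nat, (p%:R <= tau) = (p <= t)%N by move=> p; rewrite truncn_ge_nat.
clearbody t.
set A := [set l | _].
have hkey : forall l, Vset m l -> (ploss m alpha n x l <= tau) = (Pc m alpha n x l <= t)%N.
  by move=> l hl; rewrite (ploss_eq hd hn hamp hl) hPt.
case: (leqP (medidx n) t) => ht.
  have hA : Vset m `&` A = Vset m.
    apply/seteqP; split => l; first by case.
    move=> hl; split => //; rewrite /A /= hkey //.
    exact: leq_trans (Pc_le_k _ _ _ _ _) ht.
  rewrite hA divff; [lra | exact: lt0r_neq0].

have mV : measurable (Vset m) := @V_meas R m.
have mI : forall j, measurable (Iset m alpha n x j) := fun j => @Iset_meas R m alpha n x j.
have hnest : forall j j' l, (j <= j')%N -> (j' < medidx n)%N ->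
    Iset m alpha n x j l -> Iset m alpha n x j' l.
  by move=> j j' l h1 h2; rewrite !IsetE; apply: (inI_nest hd hn h1 h2).
have hAeq : Vset m `&` A = Vset m `&` Iset m alpha n x t.
  apply/seteqP; split => l [hl h]; split => //.
    by rewrite IsetE -(Pc_le alpha hd hn l ht) -hkey.
  by rewrite /A /= hkey // (Pc_le alpha hd hn l ht) -IsetE.
rewrite hAeq.
have hdis1 : (Vset m `&` Iset m alpha n x t) `&` (Vset m `\` Iset m alpha n x t) = set0.
  by apply/seteqP; split => l // [[_ h1] [_ h2]].
have := G_add alpha n x hm he (measurableI _ _ mV (mI t)) (measurableD mV (mI t))
  (@subIsetl _ _ _) (@subDsetl _ _ _) hdis1.
rewrite setUIDK => hsplit.
have hM : G m alpha eps n x (Vset m `\` Iset m alpha n x t) <= alpha * beta * m.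
  have hs'k : (maxn (medidx n)./2 t < medidx n)%N by clear -hk8 hs ht; lia.
  have hts' : (t <= maxn (medidx n)./2 t)%N by clear; lia.
  have mD1 := measurableD mV (mI (maxn (medidx n)./2 t)).
  have mD2 := measurableD (measurableI _ _ mV (mI (maxn (medidx n)./2 t))) (mI t).
  have sub2 : (Vset m `&` Iset m alpha n x (maxn (medidx n)./2 t)) `\` Iset m alpha n x t `<=` Vset m.
    by move=> l [[]].
  have hdis2 : (Vset m `\` Iset m alpha n x (maxn (medidx n)./2 t)) `&`
      ((Vset m `&` Iset m alpha n x (maxn (medidx n)./2 t)) `\` Iset m alpha n x t) = set0.
    by apply/seteqP; split => l // [[_ h1] [[_ h2] _]].
  have := G_add alpha n x hm he mD1 mD2 (@subDsetl _ _ _) sub2 hdis2.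
  have -> : (Vset m `\` Iset m alpha n x (maxn (medidx n)./2 t)) `|`
      ((Vset m `&` Iset m alpha n x (maxn (medidx n)./2 t)) `\` Iset m alpha n x t) =
      Vset m `\` Iset m alpha n x t.
    apply/seteqP; split => l.
      case => [[hl h1]|[[hl h1] h2]]; split => // h; apply: h1.
      exact: hnest h.
    move=> [hl h2]; have [h3|h3] := boolP (inI m alpha n x (maxn (medidx n)./2 t) l).
      by right; split => //; split => //; rewrite IsetE.
    by left; split => //; rewrite IsetE; apply/negP.
  move=> hsplit2.
  have hout : G m alpha eps n x (Vset m `\` Iset m alpha n x (maxn (medidx n)./2 t)) <=
      qq eps ^+ ((medidx n)./2).+1 * m.
    apply: le_trans (G_le hm he mD1 (@subDsetl _ _ _) (c := qq eps ^+ (maxn (medidx n)./2 t).+1) (b := m) _ _ _) _.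
    - apply: exprn_ge0; exact: ltW (qq_gt0 eps).
    - move=> l [hl h]; rewrite fq_eq; apply: ler_wiXn2l; [exact: ltW (qq_gt0 eps)|exact: qq_le1|].
      rewrite ltnNge (Pc_le alpha hd hn l hs'k); apply/negP => h'; apply: h; by rewrite IsetE.
    - exact (sub_measure hm mD1 (@subDsetl _ _ _)).
    apply: ler_wpM2r; first exact: ltW.
    apply: ler_wiXn2l; [exact: ltW (qq_gt0 eps)|exact: qq_le1|]; clear; lia.
  have hlay : G m alpha eps n x ((Vset m `&` Iset m alpha n x (maxn (medidx n)./2 t)) `\` Iset m alpha n x t)
      * (1 - qq eps) <= HH m n * qq eps ^+ t.+1.
    have hHH0 : 0 <= HH m n.
      rewrite /HH; apply: divr_ge0; [apply: mulr_ge0 => //; exact: ltW|exact: ler0n].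
    have claim : forall d, (t + d <= maxn (medidx n)./2 t)%N ->
        G m alpha eps n x ((Vset m `&` Iset m alpha n x (t + d)) `\` Iset m alpha n x t) * (1 - qq eps)
        <= HH m n * (qq eps ^+ t.+1 - qq eps ^+ (t.+1 + d)).
      elim=> [|d IH] hd'.
        rewrite addn0.
        have -> : (Vset m `&` Iset m alpha n x t) `\` Iset m alpha n x t = set0.
          by apply/seteqP; split => l // [[_ h1] h2].
        by rewrite /G /FF integral_set0 /= mul0r addn0 subrr mulr0.
      have hd1 : (t + d <= maxn (medidx n)./2 t)%N by clear -hd'; lia.
      have IH' := IH hd1.
      rewrite addnS in hd' *.
      have hi : (1 <= (t + d).+1 <= (medidx n)./2)%N by clear -hd'; lia.
      have hi' : ((t + d).+1 < medidx n)%N by clear -hd' hs'k; lia.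
      have mA := measurableD (measurableI _ _ mV (mI (t + d)%N)) (mI t).
      have mB := measurableD (measurableI _ _ mV (mI (t + d).+1)) (mI (t + d)%N).
      have subA : (Vset m `&` Iset m alpha n x (t + d)) `\` Iset m alpha n x t `<=` Vset m.
        by move=> l [[]].
      have subB : (Vset m `&` Iset m alpha n x (t + d).+1) `\` Iset m alpha n x (t + d) `<=` Vset m.
        by move=> l [[]].
      have hdis : ((Vset m `&` Iset m alpha n x (t + d)) `\` Iset m alpha n x t) `&`
          ((Vset m `&` Iset m alpha n x (t + d).+1) `\` Iset m alpha n x (t + d)) = set0.
        by apply/seteqP; split => l // [[[_ h1] _] [_ h2]].
      have := G_add alpha n x hm he mA mB subA subB hdis.
      have -> : ((Vset m `&` Iset m alpha n x (t + d)) `\` Iset m alpha n x t) `|`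
          ((Vset m `&` Iset m alpha n x (t + d).+1) `\` Iset m alpha n x (t + d)) =
          (Vset m `&` Iset m alpha n x (t + d).+1) `\` Iset m alpha n x t.
        apply/seteqP; split => l.
          case => [[[hl h1] h2]|[[hl h1] h2]]; split => //.
            split => //; apply: (hnest (t + d)%N) => //; clear; lia.
          move=> h; apply: h2; apply: (hnest t) => //; clear -hi'; lia.
        move=> [[hl h1] h2]; have [h3|h3] := boolP (inI m alpha n x (t + d) l).
          by left; split => //; split => //; rewrite IsetE.
        by right; split => //; rewrite IsetE; apply/negP.
      move=> hsp; rewrite hsp.
      have hB : G m alpha eps n x ((Vset m `&` Iset m alpha n x (t + d).+1) `\` Iset m alpha n x (t + d))
          <= qq eps ^+ (t + d).+1 * HH m n.
        apply: (G_le hm he mB subB).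
        - apply: exprn_ge0; exact: ltW (qq_gt0 eps).
        - move=> l [[hl h1] h]; rewrite fq_eq; apply: ler_wiXn2l; [exact: ltW (qq_gt0 eps)|exact: qq_le1|].
          have hi'' : (t + d < medidx n)%N by clear -hi'; lia.
          rewrite ltnNge (Pc_le alpha hd hn l hi''); apply/negP => h'; apply: h; by rewrite IsetE.
        - exact (layer_measure hd hn hm ha hctm hk8 hi).
      have e1 : qq eps ^+ (t + d).+1 = qq eps ^+ (t.+1 + d) by rewrite addSn.
      have e2 : qq eps ^+ (t.+1 + d.+1) = qq eps ^+ (t.+1 + d) * qq eps by rewrite addnS exprSr.
      rewrite e2; rewrite e1 in hB.
      have hq0 : 0 <= 1 - qq eps by rewrite subr_ge0; exact: qq_le1.
      have := ler_wpM2r hq0 hB.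
      move: IH'; generalize (qq eps ^+ (t.+1 + d)) (qq eps) (qq eps ^+ t.+1) => P q q1.
      move=> IH' hB'.
      lra.
    have := claim (maxn (medidx n)./2 t - t)%N ltac:(clear; lia).
    rewrite subnKC //.
    have : 0 <= HH m n * qq eps ^+ (t.+1 + (maxn (medidx n)./2 t - t)).
      apply: mulr_ge0 => //; apply: exprn_ge0; exact: ltW (qq_gt0 eps).
    lra.
  have hq1 : eps <= 3 * (1 - qq eps).
    have e : qq eps * expR (eps / 2) = 1.
      by rewrite /qq expRN mulVf // gt_eqF // expR_gt0.
    have e2 := expR_ge1Dx (eps / 2).
    have e3 := ler_wpM2l (ltW (qq_gt0 eps)) e2.
    have e4 : 0 <= (1 - qq eps) * (1 - eps).
      apply: mulr_ge0; [rewrite subr_ge0; exact: qq_le1|lra].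
    move: e e3 e4; generalize (qq eps) (expR (eps / 2)) => q E e e3 e4.
    nra.
  have hqs : qq eps ^+ ((medidx n)./2).+1 <= alpha * beta / 2.
    have hns : (n <= 4 * ((medidx n)./2).+1)%N by clear -hk hs; lia.
    have hns' : (n%:R : R) <= 4 * (((medidx n)./2).+1)%:R by rewrite -natrM ler_nat.
    rewrite /qq -expRM_natr.
    apply: le_trans (_ : _ <= expR (- L + - L)) _.
      rewrite ler_expR.
      have hp : 0 <= eps * (4 * (((medidx n)./2).+1)%:R - n%:R) by apply: mulr_ge0; lra.
      lra.
    rewrite exp.expRD hLeq.
    have := ler_wpM2l (ltW hab0) (ltW hab9); lra.
  have hH : HH m n * n%:R <= 16 * m.
    have hKn : (n <= 8 * Kp n)%N by rewrite /Kp; clear -hk hs hk8; lia.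
    have hK0 : (0 < Kp n)%N by rewrite /Kp; clear -hk hs hk8; lia.
    have hKn' : (n%:R : R) <= 8 * (Kp n)%:R by rewrite -natrM ler_nat.
    have hHK : HH m n * (Kp n)%:R = 2 * m by rewrite /HH divfK // pnatr_eq0 -lt0n.
    have hHH0 : 0 <= HH m n.
      rewrite /HH; apply: divr_ge0; [apply: mulr_ge0 => //; exact: ltW|exact: ler0n].
    have := ler_wpM2l hHH0 hKn'.
    lra.
  have hqt : qq eps ^+ t.+1 <= expR (- (100 * Lam)).
    rewrite /qq -expRM_natr ler_expR.
    have := ler_wpM2l (_ : 0 <= eps / 2) (ltW htt1).
    move=> /(_ ltac:(lra)) h; lra.
  have hYL : expR (- Lam) <= alpha * beta * n%:R * eps.
    by rewrite -[X in _ <= X]hY ler_expR; lra.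
  have h96 : 96 * expR (- (100 * Lam)) <= expR (- Lam).
    have e : expR (- Lam) = expR (99 * Lam) * expR (- (100 * Lam)).
      by rewrite -exp.expRD; congr expR; ring.
    have e2 := expR_ge1Dx (99 * Lam).
    have e3 := expR_gt0 (- (100 * Lam)).
    have := mulr_ge0 (_ : 0 <= expR (99 * Lam) - 96) (ltW e3).
    move=> /(_ ltac:(lra)); rewrite e; lra.
  set Glay := G m alpha eps n x _ in hlay hsplit2.
  have hG0 : 0 <= Glay by apply: G_ge0 => //; exact: mD2.
  have st1 : Glay * eps <= 3 * (HH m n * qq eps ^+ t.+1).
    have := ler_wpM2l hG0 hq1; lra.
  have st2 : Glay * eps * n%:R <= 48 * m * qq eps ^+ t.+1.
    have := ler_wpM2r hn0 st1.
    have := ler_wpM2r (exprn_ge0 t.+1 (ltW (qq_gt0 eps))) hH.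
    lra.
  have st3 : 48 * m * qq eps ^+ t.+1 <= m / 2 * (alpha * beta * n%:R * eps).
    have := ler_wpM2l (_ : 0 <= 48 * m) hqt.
    move=> /(_ ltac:(lra)) h1.
    have := ler_wpM2l (_ : 0 <= m / 2) (le_trans h96 hYL).
    move=> /(_ ltac:(lra)) h2.
    lra.
  have hen : 0 < eps * n%:R by apply: mulr_gt0.
  have hGl : Glay <= alpha * beta * m / 2.
    rewrite -(ler_pM2r hen).
    have : Glay * (eps * n%:R) = Glay * eps * n%:R by ring.
    have : alpha * beta * m / 2 * (eps * n%:R) = m / 2 * (alpha * beta * n%:R * eps) by ring.
    lra.
  have hout' : qq eps ^+ ((medidx n)./2).+1 * m <= alpha * beta / 2 * m.
    by apply: ler_wpM2r => //; exact: ltW.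
  rewrite hsplit2; lra.
rewrite ler_pdivlMr //.
have := ler_wpM2l (ltW hb) hZ.
lra.
Qed.

Unset Implicit Arguments.

Theorem theorem7p9 :
  exists C C' : Rdefinitions.R, 0 < C /\ 0 < C' /\
  forall (m alpha beta eps : Rdefinitions.R) (n : nat) (x : nat -> Rdefinitions.R),
    0 < m ->
    0 < alpha -> alpha < 1 / 3 ->
    0 < beta -> beta < 1 / 3 ->
    0 < eps -> eps < 1 ->
    odd n ->
    C * ln (1 / (alpha * beta)) <= n%:R * eps ->
    is_dataset m n x -> CTM n x ->
    1 - beta <=
      DPExpMed_prob m alpha eps n x
        [set l | ploss m alpha n x l <=
                 C' / eps * Num.max 1 (ln (1 / (alpha * beta * n%:R * eps)))].
Proof.
exists 16, 200; split; first by [].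
split; first by [].
move=> m alpha beta eps n x hm ha ha3 hb hb3 he he1 hn hC hd hctm.
exact: (main_gen hm ha ha3 hb hb3 he he1 hn hC hd hctm).
Qed.
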